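(* Let $\mathcal{H}$ be a complex Hilbert space, let $W_1,W_2\in\mathcal{B}(\mathcal{H})$ be co-isometries and let $Q\in\mathcal{B}(\mathcal{H})$ be a unitary such that $W_2W_1=W_1W_2Q$. Then there exist a Hilbert space $\mathcal{K}\supseteq\mathcal{H}$ and unitaries $\overline{Q},U_1,U_2\in\mathcal{B}(\mathcal{K})$, with $\mathcal{H}$ reducing $\overline{Q}$ and $\overline{Q}|_{\mathcal{H}}=Q$, such that (i) $U_2U_1=U_1U_2\overline{Q}$; and (ii) $U_i$ is a lifting of $W_i$ for $i=1,2$, so that $W_1^nW_2^m=P_{\mathcal{H}}U_1^nU_2^m|_{\mathcal{H}}$ and $W_2^nW_1^m=P_{\mathcal{H}}U_2^nU_1^m|_{\mathcal{H}}$ for all integers $n,m\geq 0$. In fact, given any $q\in\mathbb{T}$, one can choose $\overline{Q}=Q\oplus qI_{\mathcal{K}\ominus\mathcal{H}}$.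
   Context: For $\mathcal{H}\subseteq\mathcal{K}$, $S\in\mathcal{B}(\mathcal{K})$ is a lifting of $T\in\mathcal{B}(\mathcal{H})$ if $S(\mathcal{H}^\perp)\subseteq\mathcal{H}^\perp$ and $T=P_{\mathcal{H}}S|_{\mathcal{H}}$ (equivalently $S^*|_{\mathcal{H}}=T^*$). A co-isometry is $W$ with $WW^*=I$. $\mathbb{T}$ is the unit circle; $P_{\mathcal{H}}$ the orthogonal projection onto $\mathcal{H}$. *)

(* Defs.v *)
From mathcomp Require Import all_boot all_order all_algebra.
From mathcomp Require Import reals complex.
Set Implicit Arguments. Unset Strict Implicit. Unset Printing Implicit Defensive.
Import Order.TTheory GRing.Theory Num.Theory.
Local Open Scope ring_scope.

(* Cauchy / convergence
   are written with squared norms <x,x> (equivalent, eps <-> eps^2). *)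
Record hilbert (C : numClosedFieldType) := Hilbert {
  hcarrier :> lmodType C;
  hinner : hcarrier -> hcarrier -> C;
  hinnerDl : forall (a : C) (x y z : hcarrier),
      hinner (a *: x + y) z = a * hinner x z + hinner y z;
  hinnerC : forall x y : hcarrier, hinner y x = (hinner x y)^*;
  hinner_ge0 : forall x : hcarrier, 0 <= hinner x x;
  hinner_eq0 : forall x : hcarrier, hinner x x = 0 -> x = 0;
  hcomplete : forall u : nat -> hcarrier,
      (forall eps : C, 0 < eps -> exists N : nat, forall m n : nat,
          (N <= m)%N -> (N <= n)%N -> hinner (u m - u n) (u m - u n) < eps) ->
      exists l : hcarrier, forall eps : C, 0 < eps -> exists N : nat,
          forall n : nat, (N <= n)%N -> hinner (u n - l) (u n - l) < eps
}.
Arguments hinner {C} h _ _.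

Section Ops.
Variable C : numClosedFieldType.

Definition is_bounded_op (H : hilbert C) (T : H -> H) : Prop :=
  linear T /\
  exists M : C, 0 <= M /\ forall x : H, hinner H (T x) (T x) <= M * hinner H x x.

Definition is_adjoint (H : hilbert C) (T S : H -> H) : Prop :=
  forall x y : H, hinner H (T x) y = hinner H x (S y).

Definition coisometry (H : hilbert C) (W : H -> H) : Prop :=
  exists S : H -> H, is_adjoint W S /\ forall x : H, W (S x) = x.

Definition unitary (H : hilbert C) (U : H -> H) : Prop :=
  exists S : H -> H, is_adjoint U S /\
    (forall x : H, U (S x) = x) /\ (forall x : H, S (U x) = x).

Definition hembedding (H K : hilbert C) (J : H -> K) : Prop :=
  linear J /\ forall x y : H, hinner K (J x) (J y) = hinner H x y.

Definition horth (H K : hilbert C) (J : H -> K) (z : K) : Prop :=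
  forall x : H, hinner K z (J x) = 0.

(* S in B(K) is a lifting of T in B(H) (H identified with J(H)):
   S(H^perp) ⊆ H^perp and T = P_H S|_H, the latter written as
   <S (J x), J y>_K = <T x, y>_H for all x y. *)
Definition lifting (H K : hilbert C) (J : H -> K) (S : K -> K) (T : H -> H) : Prop :=
  (forall z : K, horth J z -> horth J (S z)) /\
  (forall x y : H, hinner K (S (J x)) (J y) = hinner H (T x) y).

End Ops.

(* Main.v *)
From HB Require Import structures.
Require Import Defs.
From mathcomp Require Import all_boot all_order all_algebra.
From mathcomp Require Import reals complex.
From mathcomp Require Import boolp classical_sets.
From mathcomp Require Import ring lra.
Import Order.TTheory GRing.Theory Num.Theory.
Local Open Scope ring_scope.
Set Implicit Arguments. Unset Strict Implicit. Unset Printing Implicit Defensive.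


Notation cRe := (@complex.Re _).
Notation cIm := (@complex.Im _).

Section CFacts.
Variable R : realType.
Implicit Types x y : R[i].
Lemma cReD x y : cRe (x + y) = cRe x + cRe y. Proof. by case: x; case: y. Qed.
Lemma cImD x y : cIm (x + y) = cIm x + cIm y. Proof. by case: x; case: y. Qed.
Lemma cReM x y : cRe (x * y) = cRe x * cRe y - cIm x * cIm y. Proof. by case: x; case: y. Qed.
Lemma cImM x y : cIm (x * y) = cRe x * cIm y + cIm x * cRe y.
Proof. by case: x => a b; case: y => c d /=; rewrite addrC. Qed.
Lemma cReJ x : cRe (x^*) = cRe x. Proof. by case: x. Qed.
Lemma cImJ x : cIm (x^*) = - cIm x. Proof. by case: x. Qed.
Lemma cReN x : cRe (- x) = - cRe x. Proof. by case: x. Qed.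
Lemma cImN x : cIm (- x) = - cIm x. Proof. by case: x. Qed.
Lemma cReB x y : cRe (x - y) = cRe x - cRe y. Proof. by rewrite cReD cReN. Qed.
Lemma cImB x y : cIm (x - y) = cIm x - cIm y. Proof. by rewrite cImD cImN. Qed.
Lemma le0c x : (0 <= x) = (cIm x == 0) && (0 <= cRe x).
Proof. by rewrite lecE /= eq_sym. Qed.
Lemma lt0c x : (0 < x) = (cIm x == 0) && (0 < cRe x).
Proof. by rewrite ltcE /= eq_sym. Qed.
Lemma lec x y : (x <= y) = (cIm y == cIm x) && (cRe x <= cRe y).
Proof. by rewrite lecE. Qed.
Lemma ltc x y : (x < y) = (cIm y == cIm x) && (cRe x < cRe y).
Proof. by rewrite ltcE. Qed.
Lemma complex_ext x y : cRe x = cRe y -> cIm x = cIm y -> x = y.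
Proof. by case: x => a b; case: y => c d /= -> ->. Qed.
Lemma Re_real (a : R) : cRe (a%:C)%C = a. Proof. by []. Qed.
Lemma Im_real (a : R) : cIm (a%:C)%C = 0. Proof. by []. Qed.
Lemma normc2 x : x * x^* = ((cRe x)^+2 + (cIm x)^+2)%:C%C.
Proof. by case: x => a b; apply: complex_ext => /=; rewrite ?expr2; lra. Qed.
Lemma cRei : cRe ('i%C : R[i]) = 0. Proof. by []. Qed.
Lemma cImi : cIm ('i%C : R[i]) = 1. Proof. by []. Qed.
End CFacts.

Section Conv.
Variable R : realType.
Implicit Types (u v : nat -> R) (l m : R).

Definition cvg u l := forall e : R, 0 < e -> exists N, forall n, (N <= n)%N -> `|u n - l| < e.

Lemma absP (x e : R) : `|x| < e <-> (- e < x /\ x < e).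
Proof. by rewrite ltr_norml; split => [/andP[]|[-> ->]]. Qed.

Lemma cvg_uniq u l l' : cvg u l -> cvg u l' -> l = l'.
Proof.
move=> h1 h2; apply/eqP; rewrite -subr_eq0; apply/eqP.
apply/eqP; apply/negPn/negP => hne.
have hp : 0 < `|l - l'| / 2 by rewrite divr_gt0 // normr_gt0.
have [N1 hN1] := h1 _ hp; have [N2 hN2] := h2 _ hp.
have := hN1 (maxn N1 N2) (leq_maxl _ _); have := hN2 (maxn N1 N2) (leq_maxr _ _).
set a := u _.
move=> /absP[b1 b2] /absP[c1 c2].
have : `|l - l'| < `|l - l'| ; last by rewrite ltxx.
move: b1 b2 c1 c2; case: (lerP 0 (l - l')) => hs.
  rewrite (ger0_norm hs) => *; lra.
rewrite (ltr0_norm hs) => *; lra.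
Qed.

Lemma cvg_const l : cvg (fun _ => l) l.
Proof. by move=> e he; exists 0%N => n _; rewrite subrr normr0. Qed.

Lemma cvg_add u v l m : cvg u l -> cvg v m -> cvg (fun n => u n + v n) (l + m).
Proof.
move=> h1 h2 e he.
have he2 : 0 < e / 2 by rewrite divr_gt0.
have [N1 hN1] := h1 _ he2; have [N2 hN2] := h2 _ he2.
exists (maxn N1 N2) => n hn.
have /absP[a1 a2] := hN1 n (leq_trans (leq_maxl _ _) hn).
have /absP[b1 b2] := hN2 n (leq_trans (leq_maxr _ _) hn).
apply/absP; split; lra.
Qed.

Lemma cvg_scale c u l : cvg u l -> cvg (fun n => c * u n) (c * l).
Proof.
move=> h e he.
have hc : 0 < `|c| + 1 by rewrite ltr_wpDl.
have he' : 0 < e / (`|c| + 1) by rewrite divr_gt0.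
have [N hN] := h _ he'; exists N => n hn.
rewrite -mulrBr normrM.
have h1 := hN n hn.
have h0 : 0 <= `|u n - l| by [].
have hc0 : 0 <= `|c| by [].
have heq : e / (`|c| + 1) * (`|c| + 1) = e by rewrite mulfVK // gt_eqF.
set t := e / (`|c| + 1) in h1 he' heq.
nra.
Qed.

Lemma cvg_opp u l : cvg u l -> cvg (fun n => - u n) (- l).
Proof.
move=> h; have := cvg_scale (-1) h.
by rewrite mulN1r; under eq_fun do rewrite mulN1r.
Qed.

Lemma cvg_sub u v l m : cvg u l -> cvg v m -> cvg (fun n => u n - v n) (l - m).
Proof. by move=> h1 h2; apply: cvg_add h1 (cvg_opp h2). Qed.

Lemma cvg_shift u l : cvg u l -> cvg (fun n => u n.+1) l.
Proof. by move=> h e he; have [N hN] := h e he; exists N => n hn; apply: hN; apply: leqW. Qed.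

Lemma cvg_unshift u l : cvg (fun n => u n.+1) l -> cvg u l.
Proof. by move=> h e he; have [N hN] := h e he; exists N.+1 => -[|n] // hn; apply: hN. Qed.

Lemma cvg_shiftn k u l : cvg u l -> cvg (fun n => u (n + k)%N) l.
Proof. by move=> h e he; have [N hN] := h e he; exists N => n hn; apply: hN; apply: leq_trans hn (leq_addr _ _). Qed.

Lemma cvg_ext u v l : (forall n, u n = v n) -> cvg u l -> cvg v l.
Proof. by move=> h; have -> : v = u by apply: funext => n; rewrite h. Qed.

Lemma cvg_le u v l m : (forall n, u n <= v n) -> cvg u l -> cvg v m -> l <= m.
Proof.
move=> huv h1 h2; rewrite leNgt; apply/negP => hlt.
have hp : 0 < (l - m) / 2 by rewrite divr_gt0 // subr_gt0.
have [N1 hN1] := h1 _ hp; have [N2 hN2] := h2 _ hp.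
have /absP[a1 a2] := hN1 (maxn N1 N2) (leq_maxl _ _).
have /absP[b1 b2] := hN2 (maxn N1 N2) (leq_maxr _ _).
have := huv (maxn N1 N2); lra.
Qed.

Lemma cvg_le_const u l M : (forall n, u n <= M) -> cvg u l -> l <= M.
Proof. by move=> h hu; apply: (cvg_le h hu (cvg_const M)). Qed.

Lemma cvg_ge_const u l M : (forall n, M <= u n) -> cvg u l -> M <= l.
Proof. by move=> h hu; apply: (cvg_le h (cvg_const M) hu). Qed.

Lemma mono_le u : (forall n, u n <= u n.+1) -> forall i j : nat, (i <= j)%N -> u i <= u j.
Proof.
move=> h i j /subnK <-; elim: (j - i)%N => [|k ih]; first by rewrite add0n.
by rewrite addSn; apply: le_trans ih (h _).
Qed.

Lemma cvg_mono u M : (forall n, u n <= u n.+1) -> (forall n, u n <= M) ->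
  exists l, cvg u l.
Proof.
move=> hm hb.
pose E : set R := fun x => exists n, x = u n.
have hE : has_sup E.
  by split; [exists (u 0%N), 0%N | exists M => x [n ->]].
exists (sup E) => e he.
have [x [N ->] hx] := sup_adherent he hE.
exists N => n hn; apply/absP.
have h1 : u n <= sup E by apply: sup_upper_bound => //; exists n.
have h2 := mono_le hm hn.
split; lra.
Qed.

Lemma cvg_mono_le u l : (forall n, u n <= u n.+1) -> cvg u l -> forall n, u n <= l.
Proof.
move=> hm hl n.
apply: (@cvg_ge_const (fun i => u (i + n)%N) l (u n)); last exact: cvg_shiftn.
by move=> i; apply: (mono_le hm); rewrite leq_addl.
Qed.

Lemma cvg_squeeze u v : (forall n, 0 <= u n <= v n) -> cvg v 0 -> cvg u 0.
Proof.
move=> h hv e he; have [N hN] := hv e he; exists N => n hn.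
have /absP[a1 a2] := hN n hn; have /andP[b1 b2] := h n.
apply/absP; rewrite subr0; split; lra.
Qed.

Lemma cvg_eps u l : cvg u l <-> forall e, 0 < e -> exists N, forall n, (N <= n)%N -> - e < u n - l < e.
Proof.
split=> h e he; have [N hN] := h e he; exists N => n hn.
  by have /absP[] := hN n hn => -> ->.
by apply/absP; have /andP[] := hN n hn.
Qed.

Definition limR u : R :=
  if pselect (exists l, cvg u l) is left h then projT1 (cid h) else 0.

Lemma limR_cvg u : (exists l, cvg u l) -> cvg u (limR u).
Proof. by rewrite /limR; case: pselect => // h _; case: cid. Qed.

Lemma limR_eq u l : cvg u l -> limR u = l.
Proof. by move=> h; apply: (cvg_uniq (limR_cvg _) h); exists l. Qed.

End Conv.
Section ConvC.
Variable R : realType.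
Implicit Types (u v : nat -> R[i]) (l m : R[i]).
Definition cvgC (u : nat -> R[i]) (l : R[i]) :=
  cvg (fun n => cRe (u n)) (cRe l) /\ cvg (fun n => cIm (u n)) (cIm l).

Lemma cvgC_uniq u l l' : cvgC u l -> cvgC u l' -> l = l'.
Proof. by move=> [a b] [c d]; apply: complex_ext; [apply: cvg_uniq a c | apply: cvg_uniq b d]. Qed.

Lemma cvgC_const (l : R[i]) : cvgC (fun _ => l) l.
Proof. by split; apply: cvg_const. Qed.

Lemma cvgC_add u v l m : cvgC u l -> cvgC v m -> cvgC (fun n => u n + v n) (l + m).
Proof.
move=> [a b] [c d]; split.
  by rewrite cReD; apply: cvg_ext (cvg_add a c) => n; rewrite cReD.
by rewrite cImD; apply: cvg_ext (cvg_add b d) => n; rewrite cImD.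
Qed.

Lemma cvgC_scale (c : R[i]) u l : cvgC u l -> cvgC (fun n => c * u n) (c * l).
Proof.
move=> [a b]; split.
  rewrite cReM; apply: cvg_ext (cvg_sub (cvg_scale (cRe c) a) (cvg_scale (cIm c) b)) => n.
  by rewrite cReM.
rewrite cImM; apply: cvg_ext (cvg_add (cvg_scale (cRe c) b) (cvg_scale (cIm c) a)) => n.
by rewrite cImM.
Qed.

Lemma cvgC_conj u l : cvgC u l -> cvgC (fun n => (u n)^*) l^*.
Proof.
move=> [a b]; split.
  by rewrite cReJ; apply: cvg_ext a => n; rewrite cReJ.
by rewrite cImJ; apply: cvg_ext (cvg_opp b) => n; rewrite cImJ.
Qed.

Lemma cvgC_shift u l : cvgC u l -> cvgC (fun n => u n.+1) l.
Proof. by move=> [a b]; split; [exact: (cvg_shift a) | exact: (cvg_shift b)]. Qed.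

Lemma cvgC_unshift u l : cvgC (fun n => u n.+1) l -> cvgC u l.
Proof. by move=> [a b]; split; [exact: (cvg_unshift a) | exact: (cvg_unshift b)]. Qed.

Lemma cvgC_ext u v l : (forall n, u n = v n) -> cvgC u l -> cvgC v l.
Proof. by move=> h; have -> : v = u by apply: funext => n; rewrite h. Qed.

Definition limC (u : nat -> R[i]) : R[i] :=
  Complex (limR (fun n => cRe (u n))) (limR (fun n => cIm (u n))).

Lemma limC_eq u l : cvgC u l -> limC u = l.
Proof. by move=> [a b]; apply: complex_ext; [exact: limR_eq a | exact: limR_eq b]. Qed.

End ConvC.


Section HF.
Variable R : realType.
Variable H : hilbert R[i].
Local Notation ip := (hinner H).
Implicit Types x y z : H.

Lemma ip0l z : ip 0 z = 0.
Proof.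
have := hinnerDl 1 0 0 z; rewrite scale1r addr0 mul1r => h.
by apply: (addrI (ip 0 z)); rewrite addr0 -h.
Qed.
Lemma ipDl x y z : ip (x + y) z = ip x z + ip y z.
Proof. by have := hinnerDl 1 x y z; rewrite scale1r mul1r. Qed.
Lemma ipZl a x z : ip (a *: x) z = a * ip x z.
Proof. by have := hinnerDl a x 0 z; rewrite !addr0 ip0l addr0. Qed.
Lemma ipNl x z : ip (- x) z = - ip x z.
Proof. by rewrite -scaleN1r ipZl mulN1r. Qed.
Lemma ipBl x y z : ip (x - y) z = ip x z - ip y z.
Proof. by rewrite ipDl ipNl. Qed.
Lemma ipC x y : ip y x = (ip x y)^*.
Proof. exact: hinnerC. Qed.
Lemma ipDr x y z : ip x (y + z) = ip x y + ip x z.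
Proof. by rewrite (ipC (y + z)) ipDl rmorphD /= -!ipC. Qed.
Lemma ipZr a x y : ip x (a *: y) = a^* * ip x y.
Proof. by rewrite (ipC (a *: y)) ipZl rmorphM /= -ipC. Qed.
Lemma ip0r x : ip x 0 = 0.
Proof. by rewrite ipC ip0l conjC0. Qed.
Lemma ipNr x y : ip x (- y) = - ip x y.
Proof. by rewrite -scaleN1r ipZr rmorphN /= conjC1 mulN1r. Qed.
Lemma ipBr x y z : ip x (y - z) = ip x y - ip x z.
Proof. by rewrite ipDr ipNr. Qed.

Definition nm x := cRe (ip x x).

Lemma ipxx x : ip x x = (nm x)%:C%C.
Proof.
have := hinner_ge0 x; rewrite le0c => /andP[/eqP hi _].
by apply: complex_ext.
Qed.
Lemma nm_ge0 x : 0 <= nm x.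
Proof. by have := hinner_ge0 x; rewrite le0c => /andP[]. Qed.
Lemma nm_eq0 x : nm x = 0 -> x = 0.
Proof. by move=> h; apply: hinner_eq0; rewrite ipxx h. Qed.
Lemma nm0 : nm 0 = 0.
Proof. by rewrite /nm ip0l. Qed.
Lemma Re_ipC x y : cRe (ip y x) = cRe (ip x y).
Proof. by rewrite ipC cReJ. Qed.
Lemma Im_ipC x y : cIm (ip y x) = - cIm (ip x y).
Proof. by rewrite ipC cImJ. Qed.
Lemma nmD x y : nm (x + y) = nm x + nm y + 2 * cRe (ip x y).
Proof.
rewrite /nm ipDl !ipDr !cReD (Re_ipC x y); lra.
Qed.
Lemma nmN x : nm (- x) = nm x.
Proof. by rewrite /nm ipNl ipNr opprK. Qed.
Lemma nmB x y : nm (x - y) = nm x + nm y - 2 * cRe (ip x y).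
Proof. by rewrite nmD nmN ipNr cReN; lra. Qed.
Lemma nmZ a x : nm (a *: x) = ((cRe a)^+2 + (cIm a)^+2) * nm x.
Proof.
rewrite /nm ipZl ipZr ipxx mulrA normc2 cReM /=; lra.
Qed.
Lemma nm_scaleR (t : R) x : nm ((t%:C)%C *: x) = t ^+ 2 * nm x.
Proof. by rewrite nmZ /= expr0n /= addr0. Qed.
Lemma ReZl (t : R) x y : cRe (ip ((t%:C)%C *: x) y) = t * cRe (ip x y).
Proof. by rewrite ipZl cReM /= mul0r subr0. Qed.

Lemma ip_bound x y (t : R) : 0 < t -> 2 * t * cRe (ip x y) <= t ^+ 2 * nm x + nm y.
Proof.
move=> ht; have := nm_ge0 ((t%:C)%C *: x - y).
rewrite nmB nm_scaleR ReZl; lra.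
Qed.

Lemma nm_add_le x y : nm (x + y) <= 2 * nm x + 2 * nm y.
Proof. have := ip_bound x y ltr01; rewrite nmD expr1n; lra. Qed.

Lemma nm_sub_le x y z : nm (x - z) <= 2 * nm (x - y) + 2 * nm (y - z).
Proof. by have := nm_add_le (x - y) (y - z); rewrite addrA subrK. Qed.

Lemma nm_subC x y : nm (x - y) = nm (y - x).
Proof. by rewrite -nmN opprB. Qed.

Lemma ip_eql x y : (forall z, ip x z = ip y z) -> x = y.
Proof.
move=> h; apply/eqP; rewrite -subr_eq0; apply/eqP; apply: hinner_eq0.
by rewrite ipBl h subrr.
Qed.
Lemma ip_eqr x y : (forall z, ip z x = ip z y) -> x = y.
Proof.
move=> h; apply: ip_eql => z; by rewrite ipC h -ipC.
Qed.

Lemma Re_ipi x y : cRe (ip x ('i%C *: y)) = cIm (ip x y).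
Proof. rewrite ipZr cReM cReJ cImJ /=; lra. Qed.
Lemma nm_i y : nm ('i%C *: y) = nm y.
Proof. by rewrite nmZ /= expr0n expr1n /= add0r mul1r. Qed.

Lemma Re_small x e : 0 < e -> exists d, 0 < d /\
  forall y, nm y < d -> `|cRe (ip x y)| < e.
Proof.
move=> he.
have hN := nm_ge0 x.
set N := nm x in hN *.
have hN1 : 0 < N + 1 by lra.
have [t [ht htN]] : exists t, 0 < t /\ t * (N + 1) = e.
  by exists (e / (N + 1)); rewrite divr_gt0 // mulfVK // gt_eqF.
exists (t * e); split; first by rewrite mulr_gt0.
move=> y hy; apply/absP.
have h1 := ip_bound x y ht.
have h2 := ip_bound x (- y) ht.
rewrite ipNr cReN nmN in h2.
rewrite -/N in h1 h2.
have hy0 := nm_ge0 y.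
have key : t ^+ 2 * N + nm y < 2 * t * e - t * t.
  have h3 : t * t * N = t * e - t * t by rewrite -htN; ring.
  rewrite expr2; lra.
have htt : 0 < t * t by rewrite mulr_gt0.
have h2t : 0 < 2 * t by rewrite mulr_gt0.
split.
  have : (2 * t) * (- e) < (2 * t) * cRe (ip x y) by lra.
  by rewrite ltr_pM2l.
have : (2 * t) * cRe (ip x y) < (2 * t) * e by lra.
by rewrite ltr_pM2l.
Qed.

Lemma ip_small x e : 0 < e -> exists d, 0 < d /\
  forall y, nm y < d -> `|cRe (ip x y)| < e /\ `|cIm (ip x y)| < e.
Proof.
move=> he; have [d [hd h]] := Re_small x he.
exists d; split => // y hy; split; first exact: h.
by rewrite -Re_ipi; apply: h; rewrite nm_i.
Qed.

Definition hcvg (v : nat -> H) (l : H) := cvg (fun n => nm (v n - l)) 0.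

Lemma hcvg_uniq v a b : hcvg v a -> hcvg v b -> a = b.
Proof.
move=> ha hb; apply/eqP; rewrite -subr_eq0; apply/eqP; apply: nm_eq0.
have hw := cvg_add (cvg_scale 2 ha) (cvg_scale 2 hb).
rewrite mulr0 addr0 in hw.
apply/eqP; rewrite eq_le nm_ge0 andbT.
apply: (cvg_le _ (cvg_const _) hw) => n.
by have := nm_sub_le a (v n) b; rewrite (nm_subC a (v n)).
Qed.

Lemma hcvg_ipr v l x : hcvg v l -> cvgC (fun n => ip x (v n)) (ip x l).
Proof.
move=> h; split => e he; have [d [hd hs]] := ip_small x he;
have [N hN] := h d hd; exists N => n hn;
(have hn' : nm (v n - l) < d by have := hN n hn; rewrite subr0 => /absP[]);
have [h1 h2] := hs _ hn'.
  by rewrite -cReB -ipBr.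
by rewrite -cImB -ipBr.
Qed.

Lemma hcvg_ipl v l x : hcvg v l -> cvgC (fun n => ip (v n) x) (ip l x).
Proof.
move=> h; have := cvgC_conj (hcvg_ipr x h).
by rewrite -ipC; apply: cvgC_ext => n; rewrite -ipC.
Qed.

Lemma hcvg_ext v w l : (forall n, v n = w n) -> hcvg v l -> hcvg w l.
Proof. by move=> h; have -> : w = v by apply: funext => n; rewrite h. Qed.

Lemma hcauchy (u : nat -> H) : (forall e, 0 < e -> exists N, forall m n,
  (N <= m)%N -> (N <= n)%N -> nm (u m - u n) < e) -> exists l, hcvg u l.
Proof.
move=> h.
have [l hl] : exists l, forall eps : R[i], 0 < eps -> exists N, forall n,
    (N <= n)%N -> hinner H (u n - l) (u n - l) < eps.
  apply: hcomplete => eps; rewrite lt0c => /andP[/eqP hi hr].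
  have [N hN] := h _ hr; exists N => m n hm hn.
  by rewrite ipxx ltc hi /= eqxx /=; exact: hN.
exists l => e he.
have he' : 0 < (e%:C)%C :> R[i] by rewrite lt0c /= eqxx he.
have [N hN] := hl _ he'.
exists N => n hn; rewrite subr0 ger0_norm ?nm_ge0 //.
by have := hN n hn; rewrite ipxx ltc /= => /andP[_].
Qed.

End HF.

Section Lin.
Variable R : realType.
Variables (U V : lmodType R[i]) (f : U -> V).
Hypothesis hf : linear f.
Lemma lin0 : f 0 = 0.
Proof. have := hf 1 0 0; rewrite scale1r addr0 scale1r => h. by apply: (addrI (f 0)); rewrite addr0 -h. Qed.
Lemma linD x y : f (x + y) = f x + f y.
Proof. by have := hf 1 x y; rewrite !scale1r. Qed.
Lemma linZ a x : f (a *: x) = a *: f x.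
Proof. by have := hf a x 0; rewrite !addr0 lin0 addr0. Qed.
Lemma linN x : f (- x) = - f x.
Proof. by rewrite -scaleN1r linZ scaleN1r. Qed.
Lemma linB x y : f (x - y) = f x - f y.
Proof. by rewrite linD linN. Qed.
End Lin.

Section Adj.
Variable R : realType.
Variables (K1 K2 : hilbert R[i]).
Lemma lin_adj (T : K1 -> K2) (S : K2 -> K1) :
  (forall x y, hinner K2 (T x) y = hinner K1 x (S y)) -> linear T.
Proof. by move=> h a x y; apply: ip_eql => z; rewrite h ipDl ipZl ipDl ipZl !h. Qed.

Lemma hcvg_lin (T : K1 -> K2) (M : R) v l : linear T -> 0 <= M ->
  (forall x, nm (T x) <= M * nm x) -> hcvg v l -> hcvg (fun n => T (v n)) (T l).
Proof.
move=> hT hM hb h.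
have h2 := cvg_scale M h; rewrite mulr0 in h2.
apply: (cvg_squeeze _ h2) => n; rewrite nm_ge0 /= -linB //; exact: hb.
Qed.
End Adj.


Section CoIso.
Variable R : realType.
Variable H : hilbert R[i].
Local Notation ip := (hinner H).
Variables (V T : H -> H).
Hypothesis adj : forall x y, ip (T x) y = ip x (V y).
Hypothesis VT : forall x, V (T x) = x.

Lemma coiso_T_isom x y : ip (T x) (T y) = ip x y.
Proof. by rewrite adj VT. Qed.

Lemma coiso_adj' x y : ip (V x) y = ip x (T y).
Proof. by rewrite ipC -adj -ipC. Qed.
Lemma coiso_Vlin : linear V.
Proof. exact: lin_adj coiso_adj'. Qed.
Lemma coiso_Tlin : linear T.
Proof. exact: lin_adj adj. Qed.

Lemma coiso_orth x : ip (T (V x)) (x - T (V x)) = 0.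
Proof. by rewrite adj (linB coiso_Vlin) VT subrr ip0r. Qed.

Lemma coiso_nmT x : nm (T x) = nm x.
Proof. by rewrite /nm coiso_T_isom. Qed.

Lemma coiso_pyth x : nm x = nm (V x) + nm (x - T (V x)).
Proof.
have := nmD (T (V x)) (x - T (V x)).
by rewrite coiso_orth addrC subrK coiso_nmT /= mulr0 addr0.
Qed.

Lemma coiso_nmV x : nm (V x) <= nm x.
Proof. by rewrite (coiso_pyth x) lerDl nm_ge0. Qed.

Lemma coiso_defect x : nm (x - T (V x)) = nm x - nm (V x).
Proof. have := coiso_pyth x; lra. Qed.
End CoIso.

Section Iter.
Variable R : realType.
Variable H : hilbert R[i].
Local Notation ip := (hinner H).
Variables (V T : H -> H).
Hypothesis adj : forall x y, ip (T x) y = ip x (V y).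
Hypothesis VT : forall x, V (T x) = x.

Lemma iter_adj j x y : ip (iter j T x) y = ip x (iter j V y).
Proof. by elim: j x y => [//|j ih] x y; rewrite iterS adj ih -iterSr. Qed.

Lemma iter_VT j x : iter j V (iter j T x) = x.
Proof. by elim: j x => [//|j ih] x; rewrite [iter j.+1 V _]iterSr [iter j.+1 T _]iterS VT ih. Qed.
End Iter.

Record pl (R : realType) (H : hilbert R[i]) (W : H -> H) (Wl : linear W) := PL {
  plf :> nat -> H ;
  plc : forall n, W (plf n.+1) = plf n ;
  plb : exists M : R, forall n, nm (plf n) <= M }.

Section Model.
Variable R : realType.
Variable H : hilbert R[i].
Local Notation ip := (hinner H).
Variable W : H -> H.
Hypothesis Wl : linear W.
Variable S : H -> H.
Hypothesis Sadj : forall x y, ip (W x) y = ip x (S y).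
Hypothesis WS : forall x, W (S x) = x.

Local Notation K := (@pl R H W Wl).
Local Notation PL := (@PL R H W Wl).

Lemma SWadj x y : ip (S x) y = ip x (W y).
Proof. by rewrite ipC -Sadj -ipC. Qed.

Lemma nmW x : nm (W x) <= nm x.
Proof. exact: (coiso_nmV SWadj WS). Qed.

HB.instance Definition _ := gen_eqMixin K.
HB.instance Definition _ := gen_choiceMixin K.

Lemma pl_eq (a b : K) : (forall n, a n = b n) -> a = b.
Proof.
case: a => f fc fb; case: b => g gc gb /= e.
have efg : f = g by apply: funext. subst g.
by rewrite (Prop_irrelevance fc gc) (Prop_irrelevance fb gb).
Qed.

Lemma pl0c n : W ((fun _ : nat => 0 : H) n.+1) = 0.
Proof. exact: lin0. Qed.
Lemma pl0b : exists M : R, forall n, nm ((fun _ : nat => 0 : H) n) <= M.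
Proof. by exists 0 => n; rewrite nm0. Qed.
Definition pl0 : K := PL pl0c pl0b.

Lemma pladdc (a b : K) n : W ((fun n => a n + b n) n.+1) = (fun n => a n + b n) n.
Proof. by rewrite /= (linD Wl) !plc. Qed.
Lemma pladdb (a b : K) : exists M : R, forall n, nm ((fun n => a n + b n) n) <= M.
Proof.
have [Ma ha] := plb a; have [Mb hb] := plb b.
exists (2 * Ma + 2 * Mb) => n /=; apply: le_trans (nm_add_le _ _) _.
by have := ha n; have := hb n; lra.
Qed.
Definition pladd (a b : K) : K := PL (pladdc a b) (pladdb a b).

Lemma ploppc (a : K) n : W ((fun n => - a n) n.+1) = (fun n => - a n) n.
Proof. by rewrite /= (linN Wl) !plc. Qed.
Lemma ploppb (a : K) : exists M : R, forall n, nm ((fun n => - a n) n) <= M.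
Proof. by have [Ma ha] := plb a; exists Ma => n /=; rewrite nmN. Qed.
Definition plopp (a : K) : K := PL (ploppc a) (ploppb a).

Lemma plscalec c (a : K) n : W ((fun n => c *: a n) n.+1) = (fun n => c *: a n) n.
Proof. by rewrite /= (linZ Wl) !plc. Qed.
Lemma plscaleb c (a : K) : exists M : R, forall n, nm ((fun n => c *: a n) n) <= M.
Proof.
have [Ma ha] := plb a; exists (((cRe c)^+2 + (cIm c)^+2) * Ma) => n /=.
by rewrite nmZ ler_wpM2l // addr_ge0 // sqr_ge0.
Qed.
Definition plscale c (a : K) : K := PL (plscalec c a) (plscaleb c a).

Lemma pladdA : associative pladd. Proof. by move=> a b c; apply: pl_eq => n /=; rewrite addrA. Qed.
Lemma pladdC : commutative pladd. Proof. by move=> a b; apply: pl_eq => n /=; rewrite addrC. Qed.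
Lemma pladd0 : left_id pl0 pladd. Proof. by move=> a; apply: pl_eq => n /=; rewrite add0r. Qed.
Lemma pladdN : left_inverse pl0 plopp pladd. Proof. by move=> a; apply: pl_eq => n /=; rewrite addNr. Qed.
HB.instance Definition _ := GRing.isZmodule.Build K pladdA pladdC pladd0 pladdN.
Lemma plscaleA a b v : plscale a (plscale b v) = plscale (a * b) v.
Proof. by apply: pl_eq => n /=; rewrite scalerA. Qed.
Lemma plscale1 : left_id 1 plscale. Proof. by move=> v; apply: pl_eq => n /=; rewrite scale1r. Qed.
Lemma plscaleDr : right_distributive plscale +%R.
Proof. by move=> a u v; apply: pl_eq => n /=; rewrite scalerDr. Qed.
Lemma plscaleDl v : {morph plscale^~ v : a b / a + b}.
Proof. by move=> a b; apply: pl_eq => n /=; rewrite scalerDl. Qed.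
HB.instance Definition _ := GRing.Zmodule_isLmodule.Build R[i] K plscaleA plscale1 plscaleDr plscaleDl.

Lemma plD (a b : K) n : (a + b) n = a n + b n. Proof. by []. Qed.
Lemma plN (a : K) n : (- a) n = - a n. Proof. by []. Qed.
Lemma plB (a b : K) n : (a - b) n = a n - b n. Proof. by []. Qed.
Lemma plZ c (a : K) n : (c *: a) n = c *: a n. Proof. by []. Qed.
Lemma pl0E n : (0 : K) n = 0. Proof. by []. Qed.

Lemma pl_mono (k : K) n : nm (k n) <= nm (k n.+1).
Proof. by rewrite -(plc k n); apply: nmW. Qed.

Lemma pl_iterW (k : K) j n : iter j W (k (n + j)%N) = k n.
Proof.
elim: j n => [|j ih] n; first by rewrite addn0.
by rewrite iterSr addnS plc ih.
Qed.

Definition Nk (k : K) := limR (fun n => nm (k n)).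

Lemma Nk_cvg (k : K) : cvg (fun n => nm (k n)) (Nk k).
Proof.
apply: limR_cvg; have [M hM] := plb k.
exact: cvg_mono (pl_mono k) hM.
Qed.

Lemma Nk_ge (k : K) n : nm (k n) <= Nk k.
Proof. exact: cvg_mono_le (pl_mono k) (Nk_cvg k) n. Qed.

Lemma Nk_ge0 (k : K) : 0 <= Nk k.
Proof. exact: le_trans (nm_ge0 _) (Nk_ge k 0). Qed.

Lemma Nk_le (k : K) M : (forall n, nm (k n) <= M) -> Nk k <= M.
Proof. by move=> h; apply: cvg_le_const h (Nk_cvg k). Qed.

Definition ipK (k k' : K) := limC (fun n => ip (k n) (k' n)).

Lemma ReK (a b : H) : cRe (ip a b) = 4^-1 * (nm (a + b) - nm (a - b)).
Proof.
have -> : nm (a + b) - nm (a - b) = 4 * cRe (ip a b) by rewrite nmD nmB; lra.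
by rewrite mulrA mulVf ?mul1r // pnatr_eq0.
Qed.

Lemma ImK (a b : H) : cIm (ip a b) = 4^-1 * (nm (a + 'i%C *: b) - nm (a - 'i%C *: b)).
Proof. by rewrite -Re_ipi ReK. Qed.

Lemma ipK_cvg (k k' : K) : cvgC (fun n => ip (k n) (k' n)) (ipK k k').
Proof.
suff [l hl] : exists l, cvgC (fun n => ip (k n) (k' n)) l by rewrite /ipK (limC_eq hl).
exists (Complex (4^-1 * (Nk (k + k') - Nk (k - k')))
                (4^-1 * (Nk (k + 'i%C *: k') - Nk (k - 'i%C *: k')))); split => /=.
  apply: cvg_ext (cvg_scale _ (cvg_sub (Nk_cvg (k + k')) (Nk_cvg (k - k')))) => n.
  by rewrite ReK.
apply: cvg_ext (cvg_scale _ (cvg_sub (Nk_cvg (k + 'i%C *: k')) (Nk_cvg (k - 'i%C *: k')))) => n.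
by rewrite ImK.
Qed.

Lemma ipK_eq (k k' : K) l : cvgC (fun n => ip (k n) (k' n)) l -> ipK k k' = l.
Proof. exact: cvgC_uniq (ipK_cvg k k'). Qed.

Lemma ipK_Dl a (x y z : K) : ipK (a *: x + y) z = a * ipK x z + ipK y z.
Proof.
apply: ipK_eq; apply: cvgC_ext (cvgC_add (cvgC_scale a (ipK_cvg x z)) (ipK_cvg y z)) => n.
by rewrite plD plZ hinnerDl.
Qed.

Lemma ipK_C (x y : K) : ipK y x = (ipK x y)^*.
Proof.
apply: ipK_eq; apply: cvgC_ext (cvgC_conj (ipK_cvg x y)) => n.
by rewrite -ipC.
Qed.

Lemma ipK_xx (k : K) : ipK k k = (Nk k)%:C%C.
Proof.
apply: ipK_eq; split => /=.
  by apply: cvg_ext (Nk_cvg k) => n.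
by apply: cvg_ext (cvg_const 0) => n; rewrite ipxx.
Qed.

Lemma ipK_ge0 (k : K) : 0 <= ipK k k.
Proof. by rewrite ipK_xx le0c /= eqxx Nk_ge0. Qed.

Lemma ipK_eq0 (k : K) : ipK k k = 0 -> k = 0.
Proof.
rewrite ipK_xx => -[h0]; apply: pl_eq => n; rewrite pl0E; apply: nm_eq0.
by apply/eqP; rewrite eq_le nm_ge0 andbT -h0 Nk_ge.
Qed.

Lemma Nk_sub_ge (a b : K) n : nm (a n - b n) <= Nk (a - b).
Proof. exact: (Nk_ge (a - b) n). Qed.

Lemma Nk_add_le (a b : K) : Nk (a + b) <= 2 * Nk a + 2 * Nk b.
Proof.
apply: Nk_le => n; rewrite plD; apply: le_trans (nm_add_le _ _) _.
by have := Nk_ge a n; have := Nk_ge b n; lra.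
Qed.

Lemma ipK_complete (u : nat -> K) :
  (forall eps : R[i], 0 < eps -> exists N : nat, forall m n : nat,
     (N <= m)%N -> (N <= n)%N -> ipK (u m - u n) (u m - u n) < eps) ->
  exists l : K, forall eps : R[i], 0 < eps -> exists N : nat,
     forall n : nat, (N <= n)%N -> ipK (u n - l) (u n - l) < eps.
Proof.
move=> hC.
have hR : forall e : R, 0 < e -> exists N, forall m n, (N <= m)%N -> (N <= n)%N ->
    Nk (u m - u n) < e.
  move=> e he; have he' : 0 < (e%:C)%C :> R[i] by rewrite lt0c /= eqxx he.
  have [N hN] := hC _ he'; exists N => m n hm hn.
  by have := hN m n hm hn; rewrite ipK_xx ltc /= => /andP[].
have hcoord : forall i, exists li, hcvg (fun m => u m i) li.
  move=> i; apply: hcauchy => e he; have [N hN] := hR e he.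
  by exists N => m n hm hn; apply: le_lt_trans (Nk_sub_ge _ _ i) (hN m n hm hn).
have [l hl] := choice hcoord.
have lc : forall i, W (l i.+1) = l i.
  move=> i; apply: (hcvg_uniq (v := fun m => u m i)) (hl i).
  apply: hcvg_ext (hcvg_lin (M := 1) Wl ler01 _ (hl i.+1)) => [m|x].
    by rewrite plc.
  by rewrite mul1r nmW.
have lb : exists M : R, forall i, nm (l i) <= M.
  have [N1 hN1] := hR 1 ltr01.
  exists (6 + 4 * Nk (u N1)) => i.
  have [N2 hN2] := hl i 1 ltr01.
  set m := maxn N1 N2.
  have h1 := hN1 m N1 (leq_maxl _ _) (leqnn _).
  have h2 := hN2 m (leq_maxr _ _); rewrite subr0 ger0_norm ?nm_ge0 // in h2.
  have h3 := Nk_sub_ge (u m) (u N1) i.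
  have h4 := Nk_ge (u N1) i.
  have h5 := nm_add_le (l i - u m i) (u m i).
  have h6 := nm_add_le (u m i - u N1 i) (u N1 i).
  rewrite subrK in h5; rewrite subrK in h6.
  rewrite nm_subC in h5.
  lra.
exists (PL lc lb) => eps.
rewrite lt0c => /andP[/eqP hi he].
set e := cRe eps in he *.
have he4 : 0 < e / 4 by rewrite divr_gt0.
have [N hN] := hR _ he4.
exists N => n hn; rewrite ipK_xx ltc hi /= eqxx /=.
have : Nk (u n - PL lc lb) <= 3 * (e / 4).
  apply: Nk_le => i; rewrite plB /=.
  have he8 : 0 < e / 8 by rewrite divr_gt0.
  have [N3 hN3] := hl i _ he8.
  set m := maxn N N3.
  have h1 := hN n m hn (leq_maxl _ _).
  have h2 := hN3 m (leq_maxr _ _); rewrite subr0 ger0_norm ?nm_ge0 // in h2.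
  have h3 := Nk_sub_ge (u n) (u m) i.
  have h4 := nm_sub_le (u n i) (u m i) (l i).
  lra.
lra.
Qed.

Definition plH : hilbert R[i] := @Hilbert _ K ipK ipK_Dl ipK_C ipK_ge0 ipK_eq0 ipK_complete.

End Model.


Section Red.
Variable R : realType.
Variables (H K : hilbert R[i]) (J : H -> K) (Js : K -> H).
Local Notation ip := (hinner H).
Local Notation ipk := (hinner K).
Hypothesis Jadj : forall x k, ipk (J x) k = ip x (Js k).
Hypothesis JJ : forall x y, ipk (J x) (J y) = ip x y.

Lemma Jlin : linear J. Proof. exact: lin_adj Jadj. Qed.
Lemma Jadj' k x : ipk k (J x) = ip (Js k) x.
Proof. by rewrite ipC Jadj -ipC. Qed.
Lemma Jslin : linear Js. Proof. by apply: lin_adj => k x; rewrite -Jadj'. Qed.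
Lemma JsJ x : Js (J x) = x.
Proof. by apply: ip_eqr => z; rewrite -Jadj JJ. Qed.
Lemma nmJ x : nm (J x) = nm x.
Proof. by rewrite /nm JJ. Qed.

Definition QQ (Q : H -> H) (q : R[i]) (k : K) : K := J (Q (Js k)) + q *: (k - J (Js k)).

Lemma Js_defect k : Js (k - J (Js k)) = 0.
Proof. by rewrite (linB Jslin) JsJ subrr. Qed.

Lemma Js_QQ Q q k : Js (QQ Q q k) = Q (Js k).
Proof. by rewrite /QQ (linD Jslin) (linZ Jslin) Js_defect scaler0 addr0 JsJ. Qed.

Lemma QQ_J Q q x : QQ Q q (J x) = J (Q x).
Proof. by rewrite /QQ JsJ subrr scaler0 addr0. Qed.

Lemma QQ_comp Q Q' q q' k : QQ Q q (QQ Q' q' k) = QQ (fun x => Q (Q' x)) (q * q') k.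
Proof.
rewrite /QQ Js_QQ; congr (_ + _).
by rewrite addrAC subrr add0r scalerA.
Qed.

Lemma QQ_id Q q k : (forall x, Q x = x) -> q = 1 -> QQ Q q k = k.
Proof. by move=> hQ ->; rewrite /QQ hQ scale1r addrC subrK. Qed.

Lemma QQ_adj Q Qs q : (forall x y, ip (Q x) y = ip x (Qs y)) ->
  forall k k', ipk (QQ Q q k) k' = ipk k (QQ Qs q^* k').
Proof.
move=> hQ k k'; rewrite /QQ ipDl ipZl ipDr ipZr conjCK Jadj Jadj' hQ.
by rewrite ipBl ipBr Jadj Jadj'.
Qed.

Lemma Js_orth z : (forall x, ipk z (J x) = 0) -> Js z = 0.
Proof.
move=> h; apply: ip_eqr => x; rewrite ip0r -Jadj ipC h.
exact: conjC0.
Qed.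

Lemma orth_Js z : Js z = 0 -> forall x, ipk z (J x) = 0.
Proof. by move=> h x; rewrite Jadj' h ip0l. Qed.

Lemma QQ_orth Q q z : Q 0 = 0 -> Js z = 0 -> QQ Q q z = q *: z.
Proof. by move=> hQ h; rewrite /QQ h hQ (lin0 Jlin) subr0 add0r. Qed.

Lemma pyth k : nm k = nm (Js k) + nm (k - J (Js k)).
Proof.
have := nmD (J (Js k)) (k - J (Js k)).
by rewrite addrC subrK nmJ Jadj Js_defect ip0r /= mulr0 addr0.
Qed.

Lemma QQ_nm Q Qs q k : (forall x y, ip (Q x) y = ip x (Qs y)) ->
  (forall x, Qs (Q x) = x) -> q^* * q = 1 -> nm (QQ Q q k) = nm k.
Proof.
move=> hQ hQsQ hq; rewrite /nm (QQ_adj q hQ) QQ_comp QQ_id //.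
Qed.
End Red.


Lemma iter_lin (R : realType) (V : lmodType R[i]) (f : V -> V) : linear f ->
  forall n, linear (iter n f).
Proof. by move=> hf n a x y; elim: n => [//|n ih]; rewrite !iterS ih (linD hf) (linZ hf). Qed.

Section Step.
Variable R : realType.
Variable H : hilbert R[i].
Local Notation ip := (hinner H).
Variables (W S A B Q Qs : H -> H) (q : R[i]).
Hypothesis Wl : linear W.
Hypothesis Sadj : forall x y, ip (W x) y = ip x (S y).
Hypothesis WS : forall x, W (S x) = x.
Hypothesis Badj : forall x y, ip (A x) y = ip x (B y).
Hypothesis AB : forall x, A (B x) = x.
Hypothesis Qadj : forall x y, ip (Q x) y = ip x (Qs y).
Hypothesis QQs : forall x, Q (Qs x) = x.
Hypothesis QsQ : forall x, Qs (Q x) = x.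
Hypothesis hq : q^* * q = 1.
Hypothesis Hrel : forall x, W (A x) = A (W (Q x)).

Local Notation K := (pl Wl).
Local Notation KH := (plH Wl Sadj WS).
Local Notation ipk := (hinner KH).

Lemma SWadj' x y : ip (S x) y = ip x (W y).
Proof. by rewrite ipC -Sadj -ipC. Qed.
Lemma Slin : linear S. Proof. exact: coiso_Tlin SWadj'. Qed.
Lemma Alin : linear A. Proof. exact: lin_adj Badj. Qed.
Lemma BAadj x y : ip (B x) y = ip x (A y).
Proof. by rewrite ipC -Badj -ipC. Qed.
Lemma Blin : linear B. Proof. exact: lin_adj BAadj. Qed.
Lemma nmB_ x : nm (B x) = nm x. Proof. exact: coiso_nmT BAadj AB x. Qed.
Lemma nmA_le x : nm (A x) <= nm x. Proof. exact: coiso_nmV BAadj AB x. Qed.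
Lemma Qsadj x y : ip (Qs x) y = ip x (Q y).
Proof. by rewrite ipC -Qadj -ipC. Qed.
Lemma Qlin : linear Q. Proof. exact: lin_adj Qadj. Qed.
Lemma Qslin : linear Qs. Proof. exact: lin_adj Qsadj. Qed.
Lemma nmQs x : nm (Qs x) = nm x. Proof. exact: coiso_nmT Qsadj QQs x. Qed.

Lemma B_S y : B (S y) = Qs (S (B y)).
Proof.
apply: ip_eqr => z.
by rewrite -Badj -Sadj Hrel Badj Sadj Qadj.
Qed.

Lemma iterS_adj j x y : ip (iter j S x) y = ip x (iter j W y).
Proof. exact: iter_adj SWadj' j x y. Qed.
Lemma iterWS j x : iter j W (iter j S x) = x.
Proof. exact: iter_VT WS j x. Qed.

Lemma JKc x n : W ((fun n => iter n S x) n.+1) = (fun n => iter n S x) n.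
Proof. by rewrite /= ?iterS WS. Qed.
Lemma JKb x : exists M : R, forall n, nm ((fun n => iter n S x) n) <= M.
Proof. by exists (nm x) => n; rewrite /nm /= iterS_adj iterWS. Qed.
Definition JK x : K := @PL _ _ _ Wl _ (JKc x) (JKb x).
Definition Js (k : K) : H := k 0%N.

Lemma ipkE (k k' : K) : ipk k k' = ipK k k'. Proof. by []. Qed.
Lemma ipk_cvg (k k' : K) : cvgC (fun n => ip (k n) (k' n)) (ipk k k').
Proof. exact: ipK_cvg. Qed.
Lemma ipk_eq (k k' : K) l : cvgC (fun n => ip (k n) (k' n)) l -> ipk k k' = l.
Proof. exact: ipK_eq. Qed.
Lemma nmk (k : K) : nm (k : KH) = Nk k.
Proof. by rewrite /nm ipkE (ipK_xx Sadj WS). Qed.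

Lemma iterW_k (k : K) n : iter n W (k n) = Js k.
Proof. by have := pl_iterW k n 0; rewrite add0n. Qed.

Lemma JK_adj x (k : K) : ipk (JK x) k = ip x (Js k).
Proof.
apply: ipk_eq; apply: cvgC_ext (cvgC_const (ip x (Js k))) => n /=.
by rewrite iterS_adj iterW_k.
Qed.
Lemma JK_JJ x y : ipk (JK x) (JK y) = ip x y.
Proof. by rewrite JK_adj. Qed.
Lemma Js_JK x : Js (JK x) = x. Proof. by []. Qed.

Local Notation Jadj := (JK_adj : forall x (k : KH), ipk (JK x) k = ip x (Js k)).
Local Notation JJ := (JK_JJ : forall x y, ipk (JK x) (JK y) = ip x y).

Lemma JKlin : linear (JK : H -> KH). Proof. exact: Jlin Jadj. Qed.
Lemma Jslin' : linear (Js : KH -> H). Proof. exact: Jslin Jadj. Qed.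

Definition Uf (k : K) n := if n is m.+1 then k m else W (k 0%N).
Lemma Uc (k : K) n : W (Uf k n.+1) = Uf k n.
Proof. by case: n => [|n] //=; rewrite plc. Qed.
Lemma Ub (k : K) : exists M : R, forall n, nm (Uf k n) <= M.
Proof.
have [M hM] := plb k; exists M => -[|n] /=; last exact: hM.
exact: le_trans (nmW Sadj WS _) (hM 0%N).
Qed.
Definition Uop (k : K) : K := @PL _ _ _ Wl _ (Uc k) (Ub k).

Lemma Uic (k : K) n : W ((fun n => k n.+1) n.+1) = (fun n => k n.+1) n.
Proof. exact: plc. Qed.
Lemma Uib (k : K) : exists M : R, forall n, nm ((fun n => k n.+1) n) <= M.
Proof. by have [M hM] := plb k; exists M => n; exact: hM. Qed.
Definition Uinv (k : K) : K := @PL _ _ _ Wl _ (Uic k) (Uib k).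

Lemma U_Ui k : Uop (Uinv k) = k.
Proof. by apply: pl_eq => -[|n] //=; rewrite plc. Qed.
Lemma Ui_U k : Uinv (Uop k) = k.
Proof. by apply: pl_eq. Qed.
Lemma U_adj k k' : ipk (Uop k) k' = ipk k (Uinv k').
Proof.
apply: ipk_eq; apply: cvgC_unshift.
exact: cvgC_ext (ipk_cvg k (Uinv k')).
Qed.
Lemma Ui_adj k k' : ipk (Uinv k) k' = ipk k (Uop k').
Proof. by rewrite ipC -U_adj -ipC. Qed.
Lemma Js_U k : Js (Uop k) = W (Js k). Proof. by []. Qed.
Lemma Ui_J x : Uinv (JK x) = JK (S x).
Proof. by apply: pl_eq => n /=; rewrite -iterSr. Qed.
Lemma nm_U (k : K) : nm (Uop k : KH) = nm (k : KH).
Proof. by rewrite /nm U_adj Ui_U. Qed.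
Lemma nm_Ui (k : K) : nm (Uinv k : KH) = nm (k : KH).
Proof. by rewrite /nm Ui_adj U_Ui. Qed.


Local Notation Qt := (QQ (K:=KH) JK Js Q q).
Local Notation Qti := (QQ (K:=KH) JK Js Qs q^*).

Lemma Qti_Qt (k : KH) : Qti (Qt k) = k.
Proof. by rewrite (QQ_comp Jadj JJ); apply: QQ_id => [x|]; [exact: QsQ | exact: hq]. Qed.
Lemma Qt_Qti (k : KH) : Qt (Qti k) = k.
Proof. by rewrite (QQ_comp Jadj JJ); apply: QQ_id => [x|]; [exact: QQs | rewrite mulrC; exact: hq]. Qed.
Lemma Qt_adj (k k' : KH) : ipk (Qt k) k' = ipk k (Qti k').
Proof. exact: (QQ_adj Jadj q Qadj). Qed.
Lemma Qti_adj (k k' : KH) : ipk (Qti k) k' = ipk k (Qt k').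
Proof. by rewrite (QQ_adj Jadj q^* Qsadj) conjCK. Qed.
Lemma Js_Qt (k : KH) : Js (Qt k) = Q (Js k).
Proof. exact: (Js_QQ Jadj JJ). Qed.
Lemma Js_Qti (k : KH) : Js (Qti k) = Qs (Js k).
Proof. exact: (Js_QQ Jadj JJ). Qed.
Lemma Qt_J x : Qt (JK x) = JK (Q x).
Proof. exact: (QQ_J Jadj JJ). Qed.
Lemma Qti_J x : Qti (JK x) = JK (Qs x).
Proof. exact: (QQ_J Jadj JJ). Qed.

Definition T (k : K) : K := Qti (Uinv k).
Definition Ti (k : K) : K := Uop (Qt k).
Lemma T_Ti k : T (Ti k) = k. Proof. by rewrite /T /Ti Ui_U Qti_Qt. Qed.
Lemma Ti_T k : Ti (T k) = k. Proof. by rewrite /T /Ti Qt_Qti U_Ui. Qed.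
Lemma T_adj (k k' : KH) : ipk (T k) k' = ipk k (Ti k').
Proof. by rewrite /T /Ti Qti_adj Ui_adj. Qed.
Lemma Ti_adj (k k' : KH) : ipk (Ti k) k' = ipk k (T k').
Proof. by rewrite /T /Ti U_adj Qt_adj. Qed.
Lemma T_J x : T (JK x) = JK (Qs (S x)). Proof. by rewrite /T Ui_J Qti_J. Qed.
Lemma Js_T k : Js (T k) = Qs (k 1%N). Proof. by rewrite /T Js_Qti. Qed.

Lemma iterT_adj j (k k' : KH) : ipk (iter j T k) k' = ipk k (iter j Ti k').
Proof. exact: iter_adj T_adj j k k'. Qed.
Lemma iterTi_adj j (k k' : KH) : ipk (iter j Ti k) k' = ipk k (iter j T k').
Proof. exact: iter_adj Ti_adj j k k'. Qed.
Lemma iterTiT j k : iter j Ti (iter j T k) = k. Proof. exact: (@iter_VT _ KH _ _ Ti_T j k). Qed.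
Lemma iterTTi j k : iter j T (iter j Ti k) = k. Proof. exact: (@iter_VT _ KH _ _ T_Ti j k). Qed.
Lemma nm_iterT j k : nm (iter j T k : KH) = nm (k : KH).
Proof. by rewrite /nm iterT_adj iterTiT. Qed.
Lemma nm_iterTi j k : nm (iter j Ti k : KH) = nm (k : KH).
Proof. by rewrite /nm iterTi_adj iterTTi. Qed.
Lemma iterTi_lin j : linear (iter j Ti : KH -> KH).
Proof. exact: lin_adj (iterTi_adj j). Qed.

Lemma iterT_J j x : iter j T (JK x) = JK (iter j (fun z => Qs (S z)) x).
Proof. by elim: j => [//|j ih]; rewrite iterS ih T_J. Qed.
Lemma iterQsS_B j y : iter j (fun z => Qs (S z)) (B y) = B (iter j S y).
Proof. by elim: j => [//|j ih]; rewrite iterS ih -B_S. Qed.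

Lemma U_iter_adj j (k k' : KH) : ipk (iter j Uop k) k' = ipk k (iter j Uinv k').
Proof. exact: (@iter_adj _ KH _ _ U_adj j k k'). Qed.
Lemma iterUUi j k : iter j Uop (iter j Uinv k) = k. Proof. exact: (@iter_VT _ KH _ _ U_Ui j k). Qed.
Lemma iterUiU j k : iter j Uinv (iter j Uop k) = k. Proof. exact: (@iter_VT _ KH _ _ Ui_U j k). Qed.
Lemma nm_iterU j k : nm (iter j Uop k : KH) = nm (k : KH).
Proof. by rewrite /nm U_iter_adj iterUiU. Qed.
Lemma nm_iterUi j (k : KH) : nm (iter j Uinv k : KH) = nm k.
Proof. by rewrite -{2}(iterUUi j k) nm_iterU. Qed.
Lemma iterU_lin j : linear (iter j Uop : KH -> KH).
Proof. exact: lin_adj (U_iter_adj j). Qed.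
Lemma Js_iterUi j (k : K) : Js (iter j Uinv k) = k j.
Proof.
suff h : forall i, (iter j Uinv k) i = k (i + j)%N by rewrite /Js h.
elim: j => [|j ih] i; first by rewrite addn0.
by rewrite iterS /= ih addnS.
Qed.

Definition Af (k : K) n := A (Js (iter n T k)).
Lemma Ac k n : W (Af k n.+1) = Af k n.
Proof. by rewrite /Af iterS Js_T Hrel QQs plc. Qed.
Lemma Af_le k n : nm (Af k n) <= Nk k.
Proof.
apply: le_trans (nmA_le _) _.
by rewrite -nmk -(nm_iterT n k) nmk; exact: Nk_ge.
Qed.
Lemma Ab k : exists M : R, forall n, nm (Af k n) <= M.
Proof. by exists (Nk k) => n; apply: Af_le. Qed.
Definition At (k : K) : K := @PL _ _ _ Wl _ (Ac k) (Ab k).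
Lemma Js_At k : Js (At k) = A (Js k). Proof. by []. Qed.


Lemma Tlin : linear (T : KH -> KH). Proof. exact: lin_adj T_adj. Qed.

Lemma At_lin : linear (At : KH -> KH).
Proof.
move=> a k k'; apply: pl_eq => n /=; rewrite /Af.
by rewrite (iter_lin Tlin) -(linZ Alin) -(linD Alin).
Qed.

Lemma U_At (k : K) : Uop (At k) = At (Uop (Qt k)).
Proof.
apply: pl_eq => -[|n] /=.
  by rewrite /Af /= /Js subrr scaler0 addr0 Hrel.
rewrite /Af iterSr; congr (A (Js (iter n T _))).
by rewrite /T Ui_U Qti_Qt.
Qed.

Lemma At_Ti (k : K) : At (Ti k) = Uop (At k).
Proof. by rewrite U_At. Qed.
Lemma iterAt_Ti j (k : K) : At (iter j Ti k) = iter j Uop (At k).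
Proof. by elim: j => [//|j ih]; rewrite !iterS At_Ti ih. Qed.

Lemma At_JB x : At (JK (B x)) = JK x.
Proof. by apply: pl_eq => n /=; rewrite /Af iterT_J Js_JK iterQsS_B AB. Qed.

Lemma nm_At (k : KH) : nm (At k : KH) <= nm k.
Proof. by rewrite !nmk; apply: (Nk_le Sadj WS) => n; exact: (Af_le k n). Qed.

Definition vseq (k' : K) n : K := iter n Ti (JK (B (k' n))).

Lemma vseq_diff (k' : K) m j :
  nm (vseq k' (m + j) - vseq k' m : KH) = nm (k' (m + j)%N) - nm (k' m).
Proof.
rewrite /vseq.
have -> : iter m Ti (JK (B (k' m))) = iter (m + j) Ti (iter j T (JK (B (k' m)))).
  by rewrite iterD iterTiT.
rewrite -(linB (iterTi_lin _)) nm_iterTi iterT_J iterQsS_B -(linB JKlin).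
rewrite (nmJ JJ) -(linB Blin) nmB_.
rewrite -(pl_iterW k' j m).
rewrite (coiso_defect (V := iter j W) (T := iter j S)) //.
- exact: iterS_adj.
- exact: iterWS.
Qed.

Lemma vseq_cauchy (k' : K) : forall e, 0 < e -> exists N, forall m n,
  (N <= m)%N -> (N <= n)%N -> nm (vseq k' m - vseq k' n : KH) < e.
Proof.
move=> e he.
have he2 : 0 < e / 2 by rewrite divr_gt0.
have [N hN] := (@Nk_cvg _ _ _ Wl _ Sadj WS k') (e / 2) he2.
exists N => m n hm hn.
have /absP[a1 a2] := hN m hm; have /absP[b1 b2] := hN n hn.
have [hmn|hnm] := leqP m n.
  rewrite nm_subC -(subnKC hmn) vseq_diff (subnKC hmn); lra.
rewrite -(subnKC (ltnW hnm)) vseq_diff (subnKC (ltnW hnm)); lra.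
Qed.

Lemma Bt_ex (k' : K) : exists l : KH, hcvg (H:=KH) (vseq k') l.
Proof. exact: hcauchy (vseq_cauchy k'). Qed.

Definition Bt (k' : K) : K := projT1 (cid (Bt_ex k')).
Lemma Bt_cvg (k' : K) : hcvg (H:=KH) (vseq k') (Bt k').
Proof. by rewrite /Bt; case: cid. Qed.

Lemma At_adj (k k' : KH) : ipk (At k) k' = ipk k (Bt k').
Proof.
apply: ipk_eq; apply: cvgC_ext (hcvg_ipr k (Bt_cvg k')) => n.
rewrite /vseq -iterT_adj (Jadj' Jadj) /= /Af Badj.
by [].
Qed.

Lemma Js_iterUi' j (k : KH) : Js (iter j Uinv k) = k j.
Proof. exact: Js_iterUi. Qed.

Lemma U_approx (k : K) : hcvg (H:=KH) (fun n => iter n Uop (JK (k n))) k.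
Proof.
rewrite /hcvg.
have h : forall n, nm (iter n Uop (JK (k n)) - k : KH) = Nk k - nm (k n).
  move=> n; set w := iter n Uinv k.
  have -> : JK (k n) = JK (Js w) by rewrite /w Js_iterUi.
  have -> : (iter n Uop (JK (Js w)) - k : KH) = iter n Uop (JK (Js w) - w).
    by rewrite (linB (iterU_lin n)) /w iterUUi.
  rewrite nm_iterU.
  rewrite nm_subC.
  have hp := pyth Jadj JJ w.
  have e1 : nm (w : KH) = Nk k by rewrite /w nm_iterUi nmk.
  have e2 : nm (Js w) = nm (k n) by rewrite /w Js_iterUi.
  lra.
have := cvg_sub (cvg_const (Nk k)) (Nk_cvg Sadj WS k); rewrite subrr => hc.
by apply: cvg_ext hc => n; rewrite h.
Qed.

Lemma At_bnd (x : KH) : nm (At x : KH) <= 1 * nm x.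
Proof. by rewrite mul1r nm_At. Qed.

Lemma At_Bt (k' : K) : At (Bt k') = k'.
Proof.
have h1 := hcvg_lin At_lin ler01 At_bnd (Bt_cvg k').
apply: (hcvg_uniq h1).
apply: hcvg_ext (U_approx k') => n.
by rewrite /vseq iterAt_Ti At_JB.
Qed.

Lemma nm_iterS j x : nm (iter j S x) = nm x.
Proof. by rewrite /nm iterS_adj iterWS. Qed.

Lemma qnorm : (cRe q^*)^+2 + (cIm q^*)^+2 = 1.
Proof.
have := hq; rewrite mulrC normc2 => -[h].
by rewrite cReJ cImJ sqrrN.
Qed.

Lemma T_coord (v : K) i : nm ((T v) i) = nm (v i.+1).
Proof.
have e : (T v) i = iter i S (Qs (v 1%N)) + q^* *: (v i.+1 - iter i S (v 1%N)) by [].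
rewrite e.
set a := v 1%N; set x := v i.+1.
have hxa : iter i W x = a by rewrite /x /a -(pl_iterW v i 1) add1n.
rewrite nmD nmZ qnorm mul1r ipZr iterS_adj (linB (iter_lin Wl i)) hxa iterWS subrr ip0r mulr0.
rewrite nm_iterS nmQs -{2}hxa.
rewrite (coiso_defect (iterS_adj i) (iterWS i)) hxa /=; lra.
Qed.

Lemma iterT_coord j (v : K) i : nm ((iter j T v) i) = nm (v (i + j)%N).
Proof.
elim: j i => [|j ih] i; first by rewrite addn0.
by rewrite iterS T_coord ih addSnnS.
Qed.

Lemma Bt_At (BA : forall x, B (A x) = x) (k : K) : Bt (At k) = k.
Proof.
apply: (hcvg_uniq (Bt_cvg (At k))).
rewrite /hcvg.
have h : forall n, nm (vseq (At k) n - k : KH) = Nk k - nm (k n).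
  move=> n; rewrite /vseq /= /Af BA.
  set w := iter n T k.
  have -> : (iter n Ti (JK (Js w)) - k : KH) = iter n Ti (JK (Js w) - w).
    by rewrite (linB (iterTi_lin n)) /w iterTiT.
  rewrite nm_iterTi nm_subC.
  have hp := pyth Jadj JJ w.
  have e1 : nm (w : KH) = Nk k by rewrite /w nm_iterT nmk.
  have e2 : nm (Js w) = nm (k n) by rewrite /w /Js iterT_coord add0n.
  lra.
have := cvg_sub (cvg_const (Nk k)) (Nk_cvg Sadj WS k); rewrite subrr => hc.
by apply: cvg_ext hc => n; rewrite h.
Qed.

Lemma step : exists (K' : hilbert R[i]) (J : H -> K') (Js' : K' -> H) (U Ui At' Bt' : K' -> K'),
  (forall x k, hinner K' (J x) k = ip x (Js' k)) /\
  (forall x y, hinner K' (J x) (J y) = ip x y) /\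
  (forall k k', hinner K' (U k) k' = hinner K' k (Ui k')) /\
  (forall k, U (Ui k) = k) /\ (forall k, Ui (U k) = k) /\
  (forall k, Js' (U k) = W (Js' k)) /\
  (forall k k', hinner K' (At' k) k' = hinner K' k (Bt' k')) /\
  (forall k, At' (Bt' k) = k) /\
  ((forall x, B (A x) = x) -> forall k, Bt' (At' k) = k) /\
  (forall k, Js' (At' k) = A (Js' k)) /\
  (forall k, nm (At' k) <= nm k) /\
  (forall k, U (At' k) = At' (U (QQ J Js' Q q k))).
Proof.
exists KH, JK, Js, Uop, Uinv, At, Bt.
split; first exact: JK_adj.
split; first exact: JK_JJ.
split; first exact: U_adj.
split; first exact: U_Ui.
split; first exact: Ui_U.
split; first exact: Js_U.
split; first exact: At_adj.
split; first exact: At_Bt.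
split; first by move=> h k; apply: Bt_At.
split; first exact: Js_At.
split; first exact: nm_At.
exact: U_At.
Qed.

End Step.


Section Final.
Variable R : realType.

Lemma bnd_of_nm (K : hilbert R[i]) (T : K -> K) : (forall k, nm (T k) <= nm k) ->
  exists M : R[i], 0 <= M /\ forall k, hinner K (T k) (T k) <= M * hinner K k k.
Proof.
move=> h; exists 1; split; first exact: ler01.
by move=> k; rewrite mul1r !ipxx lecR h.
Qed.

Lemma lift_of (H K : hilbert R[i]) (J : H -> K) (Js : K -> H)
  (Jadj : forall x k, hinner K (J x) k = hinner H x (Js k))
  (JJ : forall x y, hinner K (J x) (J y) = hinner H x y)
  (S : K -> K) (T : H -> H) :
  (forall k, Js (S k) = T (Js k)) -> T 0 = 0 -> lifting J S T.
Proof.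
move=> hS hT0; split.
  move=> z hz; apply: (orth_Js Jadj); rewrite hS (Js_orth Jadj hz) hT0 //.
by move=> x y; rewrite (Jadj' Jadj) hS (JsJ Jadj JJ).
Qed.

Lemma nm_of_unit (K : hilbert R[i]) (U Ui : K -> K) :
  (forall k k', hinner K (U k) k' = hinner K k (Ui k')) -> (forall k, Ui (U k) = k) ->
  forall k, nm (U k) = nm k.
Proof. by move=> h1 h2 k; rewrite /nm h1 h2. Qed.

End Final.

Theorem mainTheorem12 (R : realType) (H : hilbert R[i]) (W1 W2 Q : H -> H) :
  is_bounded_op W1 -> is_bounded_op W2 -> is_bounded_op Q ->
  coisometry W1 -> coisometry W2 -> unitary Q ->
  (forall x : H, W2 (W1 x) = W1 (W2 (Q x))) ->
  forall q : R[i], `|q| = 1 ->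
  exists (K : hilbert R[i]) (J : H -> K) (Qbar U1 U2 : K -> K),
    hembedding J /\
    is_bounded_op Qbar /\ is_bounded_op U1 /\ is_bounded_op U2 /\
    unitary Qbar /\ unitary U1 /\ unitary U2 /\
    (forall x : H, Qbar (J x) = J (Q x)) /\
    (forall z : K, horth J z -> Qbar z = q *: z) /\
    (forall z : K, U2 (U1 z) = U1 (U2 (Qbar z))) /\
    lifting J U1 W1 /\ lifting J U2 W2 /\
    (forall (n m : nat) (x y : H),
        hinner K (iter n U1 (iter m U2 (J x))) (J y)
        = hinner H (iter n W1 (iter m W2 x)) y) /\
    (forall (n m : nat) (x y : H),
        hinner K (iter n U2 (iter m U1 (J x))) (J y)
        = hinner H (iter n W2 (iter m W1 x)) y).
Proof.
move=> [W1l _] _ _ [S1 [S1adj W1S1]] [S2 [S2adj W2S2]] [Qs [Qadj [QQs QsQ]]] hrel q hq1.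
have hqq : q^* * q = 1 by rewrite -normCKC hq1 expr1n.
have hqq' : q * q^* = 1 by rewrite mulrC.
have Qsadj : forall x y, hinner H (Qs x) y = hinner H x (Q y).
  by move=> x y; rewrite ipC -Qadj -ipC.
have hrel1 : forall x, W1 (W2 x) = W2 (W1 (Qs x)).
  by move=> x; rewrite hrel QQs.
have hqc : (q^*)^* * q^* = 1 by rewrite conjCK.
have [K1 [J1 [Js1 [U1' [Ui1 [W2' [S2' [a1 [a2 [a3 [a4 [a5 [a6 [a7 [a8 [a9 [a10 [a11 a12]]]]]]]]]]]]]]]]]]
  := step W1l S1adj W1S1 S2adj W2S2 Qsadj QsQ QQs hqc hrel1.
pose Q1 := QQ J1 Js1 Q q.
pose Q1s := QQ J1 Js1 Qs q^*.
have Q1adj : forall k k', hinner K1 (Q1 k) k' = hinner K1 k (Q1s k').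
  by move=> k k'; rewrite /Q1 /Q1s (QQ_adj a1 q Qadj).
have Q1Q1s : forall k, Q1 (Q1s k) = k.
  by move=> k; rewrite /Q1 /Q1s (QQ_comp a1 a2); apply: QQ_id => [x|]; [exact: QQs | exact: hqq'].
have Q1sQ1 : forall k, Q1s (Q1 k) = k.
  by move=> k; rewrite /Q1 /Q1s (QQ_comp a1 a2); apply: QQ_id => [x|]; [exact: QsQ | exact: hqq].
have hrel2 : forall k, W2' (U1' k) = U1' (W2' (Q1 k)).
  by move=> k; rewrite a12 -/Q1s Q1sQ1.
have W2'l : linear W2' by apply: lin_adj a7.
have [K [J2 [Js2 [U2 [Ui2 [U1 [U1s [b1 [b2 [b3 [b4 [b5 [b6 [b7 [b8 [b9 [b10 [b11 b12]]]]]]]]]]]]]]]]]]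
  := step W2'l a7 a8 a3 a4 Q1adj Q1Q1s Q1sQ1 hqq hrel2.
pose J := fun x => J2 (J1 x).
pose Js := fun k => Js1 (Js2 k).
have Jadj : forall x k, hinner K (J x) k = hinner H x (Js k).
  by move=> x k; rewrite /J /Js b1 a1.
have JJ : forall x y, hinner K (J x) (J y) = hinner H x y.
  by move=> x y; rewrite /J b2 a2.
pose Qbar := QQ J2 Js2 Q1 q.
pose Qbars := QQ J2 Js2 Q1s q^*.
have Qbadj : forall k k', hinner K (Qbar k) k' = hinner K k (Qbars k').
  by move=> k k'; rewrite /Qbar /Qbars (QQ_adj b1 q Q1adj).
have QbQbs : forall k, Qbar (Qbars k) = k.
  by move=> k; rewrite /Qbar /Qbars (QQ_comp b1 b2); apply: QQ_id => [x|]; [exact: Q1Q1s | exact: hqq'].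
have QbsQb : forall k, Qbars (Qbar k) = k.
  by move=> k; rewrite /Qbar /Qbars (QQ_comp b1 b2); apply: QQ_id => [x|]; [exact: Q1sQ1 | exact: hqq].
have JsU1 : forall k, Js (U1 k) = W1 (Js k).
  by move=> k; rewrite /Js b10 a6.
have JsU2 : forall k, Js (U2 k) = W2 (Js k).
  by move=> k; rewrite /Js b6 a10.
have U1sU1 : forall k, U1s (U1 k) = k by apply: b9.
have W10 : W1 0 = 0 by exact: lin0 W1l.
have W2l : linear W2 by exact: lin_adj S2adj.
have W20 : W2 0 = 0 by exact: lin0 W2l.
exists K, J, Qbar, U1, U2.
split; first by split; [exact: lin_adj Jadj | exact: JJ].
split; first by split; [exact: lin_adj Qbadj | apply: bnd_of_nm => k; rewrite (nm_of_unit Qbadj QbsQb)].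
split; first by split; [exact: lin_adj b7 | apply: bnd_of_nm; exact: b11].
split; first by split; [exact: lin_adj b3 | apply: bnd_of_nm => k; rewrite (nm_of_unit b3 b5)].
split; first by exists Qbars.
split; first by exists U1s.
split; first by exists Ui2.
split.
  move=> x; rewrite /Qbar /J (QQ_J b1 b2) /Q1 (QQ_J a1 a2) //.
split.
  move=> z hz.
  have hJs : Js z = 0 by exact: (Js_orth Jadj hz).
  have hQ0 : Q 0 = 0 by apply: (lin0 (lin_adj Qadj)).
  have hw : Q1 (Js2 z) = q *: Js2 z by rewrite /Q1 (QQ_orth a1) //.
  rewrite /Qbar /QQ hw (linZ (Jlin b1)) scalerBr addrC subrK //.
split; first exact: b12.
have iterJs : forall n m k, Js (iter n U1 (iter m U2 k)) = iter n W1 (iter m W2 (Js k)).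
  move=> n m k; elim: n => [|n ih] /=.
    by elim: m => [//|m ih] /=; rewrite JsU2 ih.
  by rewrite JsU1 ih.
have iterJs' : forall n m k, Js (iter n U2 (iter m U1 k)) = iter n W2 (iter m W1 (Js k)).
  move=> n m k; elim: n => [|n ih] /=.
    by elim: m => [//|m ih] /=; rewrite JsU1 ih.
  by rewrite JsU2 ih.
split; first exact: (lift_of Jadj JJ JsU1 W10).
split; first exact: (lift_of Jadj JJ JsU2 W20).
split.
  by move=> n m x y; rewrite (Jadj' Jadj) iterJs (JsJ Jadj JJ).
by move=> n m x y; rewrite (Jadj' Jadj) iterJs' (JsJ Jadj JJ).
Qed.
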